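(* For every intuitionistic formula $A$: every proof of $\ \Rightarrow w:A$ in $\mathsf{L(IL)}$ can be step-wise translated into a proof of the nested sequent $\ \Rightarrow A$ in $\mathsf{N(IL)}$. In particular, if $\Rightarrow w:A$ is provable in $\mathsf{L(IL)}$ then $\Rightarrow A$ is provable in $\mathsf{N(IL)}$.
   Context: Intuitionistic formulas: $A::=p\mid\bot\mid A\lor A\mid A\land A\mid A\supset A$. $\mathsf{L(IL)}$ works on labeled sequents $\mathcal{R},\Gamma\Rightarrow\Delta$ ($\mathcal{R}$ multiset of atoms $w\le u$; $\Gamma,\Delta$ multisets of labeled formulas $w:A$) with rules: $(id)$ $\mathcal{R},w\le u,\Gamma,w:p\Rightarrow u:p,\Delta$; $(\bot_l)$ $\mathcal{R},w\le u,\Gamma,w:\bot\Rightarrow\Delta$; $(\supset_r)$ from $\mathcal{R},w\le u,\Gamma,u:A\Rightarrow u:B,\Delta$ infer $\mathcal{R},\Gamma\Rightarrow w:A\supset B,\Delta$, $u$ fresh; $(\lor_l)$ from $\mathcal{R},\Gamma,w:A\Rightarrow\Delta$ and $\mathcal{R},\Gamma,w:B\Rightarrow\Delta$ infer $\mathcal{R},\Gamma,w:A\lor B\Rightarrow\Delta$; $(\lor_r)$ from $\mathcal{R},\Gamma\Rightarrow w:A,w:B,\Delta$ infer $\mathcal{R},\Gamma\Rightarrow w:A\lor B,\Delta$; $(\land_l)$ from $\mathcal{R},\Gamma,w:A,w:B\Rightarrow\Delta$ infer $\mathcal{R},\Gamma,w:A\land B\Rightarrow\Delta$; $(\land_r)$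 from $\mathcal{R},\Gamma\Rightarrow w:A,\Delta$ and $\mathcal{R},\Gamma\Rightarrow w:B,\Delta$ infer $\mathcal{R},\Gamma\Rightarrow w:A\land B,\Delta$; $(\supset_l)$ from $\mathcal{R},w\le u,\Gamma,w:A\supset B,u:B\Rightarrow\Delta$ and $\mathcal{R},w\le u,\Gamma,w:A\supset B\Rightarrow u:A,\Delta$ infer $\mathcal{R},w\le u,\Gamma,w:A\supset B\Rightarrow\Delta$; $(ref)$ from $\mathcal{R},w\le w,\Gamma\Rightarrow\Delta$ infer $\mathcal{R},\Gamma\Rightarrow\Delta$; $(tra)$ from $\mathcal{R},w\le u,u\le v,w\le v,\Gamma\Rightarrow\Delta$ infer $\mathcal{R},w\le u,u\le v,\Gamma\Rightarrow\Delta$. Nested sequents of $\mathsf{N(IL)}$ have the form $\Gamma\Rightarrow\Delta,[\Sigma_1]_{w_1},\dots,[\Sigma_n]_{w_n}$ with $\Gamma,\Delta$ multisets of formulas and $\Sigma_i$ nested sequents; they encode trees whose nodes are sequents $\Gamma\Rightarrow\Delta$, each node carrying a distinct name (the root named $r$). $\Sigma\{\Gamma\Rightarrow\Delta\}_w$ denotes a nested sequent with node $w$ containing $\Gamma\Rightarrow\Delta$, and $\Sigma\{\cdot\}_w\{\cdot\}_u$ displays two nodes; ''$u$ is reachable from $w$'' means there is a (possibly length-0) downward path from $w$ to $u$ in the tree. Rules of $\mathsf{N(IL)}$: $(id)$ $\Sigma\{\Gamma_1,p\Rightarrow\Delta_1\}_w\{\Gamma_2\Rightarrow p,\Delta_2\}_u$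 ($u$ reachable from $w$; if $u=w$ this means $p$ occurs on both sides of one node); $(\bot_l)$ $\Sigma\{\Gamma,\bot\Rightarrow\Delta\}_w$; $(\lor_l),(\lor_r),(\land_l),(\land_r)$ as the sequent rules applied inside a node $\Sigma\{\cdot\}_w$; $(\supset_l)$ from $\Sigma\{\Gamma_1,A\supset B\Rightarrow\Delta_1\}_w\{\Gamma_2,B\Rightarrow\Delta_2\}_u$ and $\Sigma\{\Gamma_1,A\supset B\Rightarrow\Delta_1\}_w\{\Gamma_2\Rightarrow A,\Delta_2\}_u$ infer $\Sigma\{\Gamma_1,A\supset B\Rightarrow\Delta_1\}_w\{\Gamma_2\Rightarrow\Delta_2\}_u$ ($u$ reachable from $w$); $(\supset_r)$ from $\Sigma\{\Gamma\Rightarrow\Delta,[A\Rightarrow B]_u\}_w$ infer $\Sigma\{\Gamma\Rightarrow\Delta,A\supset B\}_w$ ($u$ a fresh name). *)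

(* Defs.v *)
(* Multisets are lists; every rule
   picks its principal formulas up to Permutation / membership, so
   derivability depends only on the underlying multisets. *)
From Stdlib Require Import List Permutation.
Import ListNotations.

Inductive form : Type :=
| Var : nat -> form
| Bot : form
| Or  : form -> form -> form
| And : form -> form -> form
| Imp : form -> form -> form.

Definition label := nat.
Definition lform := (label * form)%type.
Definition rel_atom := (label * label)%type. (* w <= u *)

Definition labels_R (R : list rel_atom) : list label :=
  flat_map (fun p => [fst p; snd p]) R.
Definition labels_F (G : list lform) : list label := map fst G.

Inductive LProv : list rel_atom -> list lform -> list lform -> Prop :=
| L_id : forall R G D w u p,
    In (w, u) R -> In (w, Var p) G -> In (u, Var p) D -> LProv R G D
| L_botl : forall R G D w u,
    In (w, u) R -> In (w, Bot) G -> LProv R G D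
| L_impr : forall R G D D' w u A B,
    Permutation D ((w, Imp A B) :: D') ->
    ~ In u (labels_R R) -> ~ In u (labels_F G) -> ~ In u (labels_F D) ->
    LProv ((w, u) :: R) ((u, A) :: G) ((u, B) :: D') ->
    LProv R G D
| L_orl : forall R G G' D w A B,
    Permutation G ((w, Or A B) :: G') ->
    LProv R ((w, A) :: G') D -> LProv R ((w, B) :: G') D -> LProv R G D
| L_orr : forall R G D D' w A B,
    Permutation D ((w, Or A B) :: D') ->
    LProv R G ((w, A) :: (w, B) :: D') -> LProv R G D
| L_andl : forall R G G' D w A B,
    Permutation G ((w, And A B) :: G') ->
    LProv R ((w, A) :: (w, B) :: G') D -> LProv R G D
| L_andr : forall R G D D' w A B,
    Permutation D ((w, And A B) :: D') ->
    LProv R G ((w, A) :: D') -> LProv R G ((w, B) :: D') -> LProv R G D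
| L_impl : forall R G D w u A B,
    In (w, u) R -> In (w, Imp A B) G ->
    LProv R ((u, B) :: G) D -> LProv R G ((u, A) :: D) -> LProv R G D
| L_ref : forall R G D w,
    LProv ((w, w) :: R) G D -> LProv R G D
| L_tra : forall R G D w u v,
    In (w, u) R -> In (u, v) R ->
    LProv ((w, v) :: R) G D -> LProv R G D.

(* A nested sequent: a tree whose nodes carry a name and a sequent
   Gamma => Delta; Node w G D ch  is  G => D, [ch_1]_{w1}, ..., [ch_n]_{wn}
   with the node named w. *)
Inductive nseq : Type :=
| Node : nat -> list form -> list form -> list nseq -> nseq.

Fixpoint names (t : nseq) : list nat :=
  match t with
  | Node w _ _ ch => w :: flat_map names ch
  end.

Inductive nctx : Type :=
| Hole : nctx
| CNode : nat -> list form -> list form -> list nseq -> nctx -> list nseq -> nctx.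

Fixpoint plug (C : nctx) (t : nseq) : nseq :=
  match C with
  | Hole => t
  | CNode w G D l C' r => Node w G D (l ++ plug C' t :: r)
  end.

(* Two displayed nodes  Sigma{G1 => D1}_w{G2 => D2}_u  with u a proper
   descendant of w (u reachable from w by a path of length >= 1):
     plug C (Node w G1 D1 (l ++ plug E (Node u G2 D2 ch2) :: r) ) *)
Definition two (C : nctx) (w : nat) (G1 D1 : list form) (l : list nseq)
  (E : nctx) (u : nat) (G2 D2 : list form) (ch2 r : list nseq) : nseq :=
  plug C (Node w G1 D1 (l ++ plug E (Node u G2 D2 ch2) :: r)).

Inductive NProv : nseq -> Prop :=
(* (id), u = w *)
| N_id_same : forall C w G D ch p,
    In (Var p) G -> In (Var p) D -> NProv (plug C (Node w G D ch))
(* (id), u a proper descendant of w *)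
| N_id_desc : forall C w G1 D1 l E u G2 D2 ch2 r p,
    In (Var p) G1 -> In (Var p) D2 ->
    NProv (two C w G1 D1 l E u G2 D2 ch2 r)
| N_botl : forall C w G D ch,
    In Bot G -> NProv (plug C (Node w G D ch))
| N_orl : forall C w G G' D ch A B,
    Permutation G (Or A B :: G') ->
    NProv (plug C (Node w (A :: G') D ch)) ->
    NProv (plug C (Node w (B :: G') D ch)) ->
    NProv (plug C (Node w G D ch))
| N_orr : forall C w G D D' ch A B,
    Permutation D (Or A B :: D') ->
    NProv (plug C (Node w G (A :: B :: D') ch)) ->
    NProv (plug C (Node w G D ch))
| N_andl : forall C w G G' D ch A B,
    Permutation G (And A B :: G') ->
    NProv (plug C (Node w (A :: B :: G') D ch)) ->
    NProv (plug C (Node w G D ch))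
| N_andr : forall C w G D D' ch A B,
    Permutation D (And A B :: D') ->
    NProv (plug C (Node w G (A :: D') ch)) ->
    NProv (plug C (Node w G (B :: D') ch)) ->
    NProv (plug C (Node w G D ch))
(* (imp_l), u = w *)
| N_impl_same : forall C w G D ch A B,
    In (Imp A B) G ->
    NProv (plug C (Node w (B :: G) D ch)) ->
    NProv (plug C (Node w G (A :: D) ch)) ->
    NProv (plug C (Node w G D ch))
(* (imp_l), u a proper descendant of w *)
| N_impl_desc : forall C w G1 D1 l E u G2 D2 ch2 r A B,
    In (Imp A B) G1 ->
    NProv (two C w G1 D1 l E u (B :: G2) D2 ch2 r) ->
    NProv (two C w G1 D1 l E u G2 (A :: D2) ch2 r) ->
    NProv (two C w G1 D1 l E u G2 D2 ch2 r)
| N_impr : forall C w G D D' ch u A B,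
    Permutation D (Imp A B :: D') ->
    ~ In u (names (plug C (Node w G D ch))) ->
    NProv (plug C (Node w G D' (Node u [A] [B] [] :: ch))) ->
    NProv (plug C (Node w G D ch)).

Definition root_name : nat := 0.

(* Main.v *)
Require Import Defs.
From Stdlib Require Import List Permutation Arith Lia.
Import ListNotations.

Inductive skel : Type := SN : nat -> list skel -> skel.

Fixpoint snames (s : skel) : list nat :=
  match s with SN n ch => n :: flat_map snames ch end.

Section SkelInd.
Variable P : skel -> Prop.
Hypothesis HP : forall n ch, (forall c, In c ch -> P c) -> P (SN n ch).
Fixpoint skel_ind' (s : skel) : P s :=
  match s with
  | SN n ch => HP n ch ((fix F (l : list skel) : forall c, In c l -> P c :=
       match l with
       | [] => fun c H => False_ind _ H
       | x :: xs => fun c H => match H with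
                     | or_introl e => eq_ind x P (skel_ind' x) c e
                     | or_intror H' => F xs c H' end
       end) ch)
  end.
End SkelInd.

Inductive sctx : Type := SH : sctx | SC : nat -> list skel -> sctx -> list skel -> sctx.
Fixpoint splug (K : sctx) (t : skel) : skel :=
  match K with SH => t | SC n l K' r => SN n (l ++ splug K' t :: r) end.
Fixpoint cnames (K : sctx) : list nat :=
  match K with SH => [] | SC n l K' r => n :: flat_map snames l ++ cnames K' ++ flat_map snames r end.
Fixpoint scomp (K1 K2 : sctx) : sctx :=
  match K1 with SH => K2 | SC n l K r => SC n l (scomp K K2) r end.

Lemma splug_comp K1 K2 t : splug (scomp K1 K2) t = splug K1 (splug K2 t).
Proof. induction K1; simpl; auto. rewrite IHK1; auto. Qed.

Lemma snames_splug K t : Permutation (snames (splug K t)) (cnames K ++ snames t).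
Proof.
  induction K as [|n l K IH r]; simpl.
  - reflexivity.
  - constructor. rewrite flat_map_app. simpl. rewrite <- !app_assoc.
    apply Permutation_app_head.
    eapply perm_trans. apply Permutation_app_tail, IH.
    rewrite <- app_assoc. apply Permutation_app_head. apply Permutation_app_comm.
Qed.

Lemma in_splug K t x : In x (snames t) -> In x (snames (splug K t)).
Proof. intro H. eapply Permutation_in. symmetry; apply snames_splug. apply in_or_app; right; auto. Qed.

Lemma in_splug_ctx K t x : In x (cnames K) -> In x (snames (splug K t)).
Proof. intro H. eapply Permutation_in. symmetry; apply snames_splug. apply in_or_app; left; auto. Qed.

Lemma nodup_app_disj {A} (l1 l2 : list A) x : NoDup (l1 ++ l2) -> In x l1 -> In x l2 -> False.
Proof.
  induction l1 as [|a l1 IH]; simpl; intros ND H1 H2; [exact H1|].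
  inversion ND as [|? ? Hn ND']; subst. destruct H1 as [<-|H1].
  - apply Hn. apply in_or_app. right. auto.
  - eauto.
Qed.

Lemma nodup_insert {A} (l1 l2 : list A) x : NoDup (l1 ++ l2) -> ~ In x (l1 ++ l2) -> NoDup (l1 ++ x :: l2).
Proof.
  induction l1 as [|y l1 IH]; simpl; intros ND Hx.
  - constructor; auto.
  - inversion ND as [|? ? Hn ND']; subst. constructor.
    + rewrite in_app_iff in *. simpl. intros [H|[H|H]]; auto.
    + apply IH; auto.
Qed.

Lemma nodup_splug K t : NoDup (snames (splug K t)) -> NoDup (snames t) /\ (forall x, In x (snames t) -> ~ In x (cnames K)).
Proof.
  intro ND. apply (Permutation_NoDup (snames_splug K t)) in ND. split.
  - eapply NoDup_app_remove_l; eauto.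
  - intros x H1 H2. eapply nodup_app_disj; eauto.
Qed.

Lemma name_decomp s b : In b (snames s) -> exists K ch, s = splug K (SN b ch).
Proof.
  induction s as [n ch IH] using skel_ind'. simpl. intros [E|H].
  - subst. exists SH, ch. reflexivity.
  - apply in_flat_map in H. destruct H as [c [Hc Hb]].
    destruct (IH c Hc Hb) as [K [ch' E]].
    destruct (in_split _ _ Hc) as [l [r E']]. subst.
    exists (SC n l K r), ch'. simpl. reflexivity.
Qed.

Lemma in_flat_map_intro (l : list skel) x c : In c l -> In x (snames c) -> In x (flat_map snames l).
Proof. intros; apply in_flat_map; eauto. Qed.

Lemma mid_uniq (l1 r1 l2 r2 : list skel) x1 x2 a :
  l1 ++ x1 :: r1 = l2 ++ x2 :: r2 -> NoDup (flat_map snames (l1 ++ x1 :: r1)) ->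
  In a (snames x1) -> In a (snames x2) -> x1 = x2.
Proof.
  revert l2. induction l1 as [|y l1 IH]; intros [|z l2]; simpl; intros E ND H1 H2.
  - injection E; auto.
  - injection E as E1 E2. subst z r1. exfalso.
    apply (nodup_app_disj _ _ a ND H1). apply (in_flat_map_intro _ _ x2); auto.
    apply in_or_app; right; left; auto.
  - injection E as E1 E2. subst y r2. exfalso.
    apply (nodup_app_disj _ _ a ND H2). apply (in_flat_map_intro _ _ x1); auto.
    apply in_or_app; right; left; auto.
  - injection E as E1 E2. subst z. eapply IH; eauto. eapply NoDup_app_remove_l; eauto.
Qed.

Lemma nodup_mid (l r : list skel) x : NoDup (flat_map snames (l ++ x :: r)) -> NoDup (snames x).
Proof. intro H. rewrite flat_map_app in H; simpl in H. apply NoDup_app_remove_l in H.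
  apply NoDup_app_remove_r in H. auto. Qed.

Lemma splug_uniq K1 K2 a c1 c2 : splug K1 (SN a c1) = splug K2 (SN a c2) ->
  NoDup (snames (splug K1 (SN a c1))) -> c1 = c2.
Proof.
  revert K2. induction K1 as [|n1 l1 K1 IH r1]; intros [|n2 l2 K2 r2]; simpl; intros E ND.
  - injection E; auto.
  - injection E as E1 E2. subst n2 c1. exfalso. inversion ND as [|? ? Hn _]. apply Hn.
    apply (in_flat_map_intro _ _ (splug K2 (SN a c2))). apply in_or_app; right; left; auto.
    apply in_splug; simpl; auto.
  - injection E as E1 E2. subst n1 c2. exfalso. inversion ND as [|? ? Hn _]. apply Hn.
    apply (in_flat_map_intro _ _ (splug K1 (SN a c1))). apply in_or_app; right; left; auto.
    apply in_splug; simpl; auto.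
  - injection E as E1 E2. subst n2. inversion ND as [|? ? Hn ND'].
    assert (X: splug K1 (SN a c1) = splug K2 (SN a c2)).
    { eapply mid_uniq; eauto; apply in_splug; simpl; auto. }
    eapply IH; eauto. eapply nodup_mid; eauto.
Qed.

Section Build.
Variables (g d : nat -> list form).
Fixpoint build (s : skel) : nseq :=
  match s with SN n ch => Node n (g n) (d n) (map build ch) end.
Fixpoint bctx (K : sctx) : nctx :=
  match K with SH => Hole | SC n l K' r => CNode n (g n) (d n) (map build l) (bctx K') (map build r) end.
Lemma build_splug K t : build (splug K t) = plug (bctx K) (build t).
Proof. induction K; simpl; auto. rewrite map_app. simpl. rewrite IHK. reflexivity. Qed.
Lemma bctx_comp K1 K2 t : plug (bctx (scomp K1 K2)) t = plug (bctx K1) (plug (bctx K2) t).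
Proof. induction K1; simpl; auto. rewrite IHK1; auto. Qed.
Lemma names_build s : names (build s) = snames s.
Proof.
  induction s as [n ch IH] using skel_ind'. simpl. f_equal.
  induction ch as [|c ch IHch]; simpl; auto.
  rewrite IH by (left; auto). rewrite IHch; auto. intros c' Hc'; apply IH; right; auto.
Qed.
End Build.

Lemma build_agree g d g' d' s : (forall m, In m (snames s) -> g m = g' m /\ d m = d' m) ->
  build g d s = build g' d' s.
Proof.
  induction s as [n ch IH] using skel_ind'. intros H. simpl.
  destruct (H n (or_introl eq_refl)) as [H1 H2]. rewrite H1, H2. f_equal.
  apply map_ext_in. intros c Hc. apply IH; auto. intros m Hm. apply H. simpl. right.
  apply in_flat_map. eauto.
Qed.

Lemma map_agree g d g' d' l : (forall m, In m (flat_map snames l) -> g m = g' m /\ d m = d' m) ->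
  map (build g d) l = map (build g' d') l.
Proof. intros H. apply map_ext_in. intros c Hc. apply build_agree. intros m Hm. apply H.
  apply in_flat_map; eauto. Qed.

Lemma bctx_agree g d g' d' K : (forall m, In m (cnames K) -> g m = g' m /\ d m = d' m) ->
  bctx g d K = bctx g' d' K.
Proof.
  induction K as [|n l K IH r]; simpl; intros H; auto.
  destruct (H n (or_introl eq_refl)) as [H1 H2]. rewrite H1, H2.
  rewrite (map_agree g d g' d' l), (map_agree g d g' d' r), IH; auto;
  intros m Hm; apply H; right; rewrite !in_app_iff; tauto.
Qed.

Lemma step K b ch g d g' d' :
  NoDup (snames (splug K (SN b ch))) ->
  (forall m, m <> b -> In m (snames (splug K (SN b ch))) -> g m = g' m /\ d m = d' m) ->
  build g' d' (splug K (SN b ch)) = plug (bctx g d K) (Node b (g' b) (d' b) (map (build g d) ch)).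
Proof.
  intros ND H. destruct (nodup_splug _ _ ND) as [ND1 Hdis].
  rewrite build_splug. f_equal.
  - symmetry. apply bctx_agree. intros m Hm. apply H.
    + intro E; subst m. apply (Hdis b); simpl; auto.
    + apply in_splug_ctx; auto.
  - simpl. f_equal. symmetry. apply map_agree. intros m Hm. apply H.
    + intro E; subst m. inversion ND1; auto.
    + apply in_splug. simpl. right. auto.
Qed.

Lemma node_case Sk g d a : NoDup (snames Sk) -> In a (snames Sk) ->
  exists C chs, build g d Sk = plug C (Node a (g a) (d a) chs) /\
  forall g' d', (forall m, m <> a -> g m = g' m) -> (forall m, m <> a -> d m = d' m) ->
     build g' d' Sk = plug C (Node a (g' a) (d' a) chs).
Proof.
  intros ND Ha. destruct (name_decomp Sk a Ha) as [K [ch E]]. subst Sk.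
  exists (bctx g d K), (map (build g d) ch). split.
  - rewrite build_splug. reflexivity.
  - intros g' d' Hg Hd. apply step; auto.
Qed.

Definition reach (Sk : skel) a b := exists K ch, Sk = splug K (SN a ch) /\ In b (snames (SN a ch)).
Definition reach' Sk a b := a = b \/ reach Sk a b.

Lemma reach_in Sk a b : reach Sk a b -> In a (snames Sk) /\ In b (snames Sk).
Proof. intros [K [ch [E H]]]. subst. split; apply in_splug; simpl; auto. Qed.

Lemma reach_trans Sk a b c : NoDup (snames Sk) -> reach Sk a b -> reach Sk b c -> reach Sk a c.
Proof.
  intros ND [K1 [ch1 [E1 H1]]] [K2 [ch2 [E2 H2]]].
  destruct (name_decomp _ _ H1) as [K3 [ch3 E3]].
  assert (E4 : Sk = splug (scomp K1 K3) (SN b ch3)) by (rewrite splug_comp, <- E3; auto).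
  assert (ch3 = ch2). { eapply splug_uniq. rewrite <- E4; exact E2. rewrite <- E4; exact ND. }
  subst ch3. exists K1, ch1. split; auto. rewrite E3. apply in_splug. exact H2.
Qed.

Lemma reach'_trans Sk a b c : NoDup (snames Sk) -> reach' Sk a b -> reach' Sk b c -> reach' Sk a c.
Proof.
  intros ND [E1|H1] [E2|H2]; unfold reach'.
  - left; congruence.
  - subst; right; auto.
  - subst; right; auto.
  - right; eapply reach_trans; eauto.
Qed.

Lemma reach_decomp Sk a b : reach Sk a b -> a <> b ->
  exists K l K2 ch2 r, Sk = splug K (SN a (l ++ splug K2 (SN b ch2) :: r)).
Proof.
  intros [K [ch [E H]]] Hne. simpl in H. destruct H as [H|H]; [congruence|].
  apply in_flat_map in H. destruct H as [c [Hc Hb]].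
  destruct (name_decomp _ _ Hb) as [K2 [ch2 E2]].
  destruct (in_split _ _ Hc) as [l [r E3]]. subst.
  exists K, l, K2, ch2, r. reflexivity.
Qed.

Lemma two_step K a l K2 b ch2 r g d g' d' :
  NoDup (snames (splug K (SN a (l ++ splug K2 (SN b ch2) :: r)))) ->
  (forall m, m <> b -> g m = g' m) -> (forall m, m <> b -> d m = d' m) ->
  build g' d' (splug K (SN a (l ++ splug K2 (SN b ch2) :: r))) =
  two (bctx g d K) a (g a) (d a) (map (build g d) l) (bctx g d K2) b (g' b) (d' b)
      (map (build g d) ch2) (map (build g d) r).
Proof.
  intros ND Hg Hd.
  replace (splug K (SN a (l ++ splug K2 (SN b ch2) :: r))) with (splug (scomp K (SC a l K2 r)) (SN b ch2)) in *
    by (rewrite splug_comp; reflexivity).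
  rewrite (step _ _ _ g d g' d'); auto.
  rewrite bctx_comp. reflexivity.
Qed.

Lemma two_case Sk g d a b : NoDup (snames Sk) -> reach Sk a b -> a <> b ->
  exists C l E ch2 r, build g d Sk = two C a (g a) (d a) l E b (g b) (d b) ch2 r /\
  forall g' d', (forall m, m <> b -> g m = g' m) -> (forall m, m <> b -> d m = d' m) ->
     build g' d' Sk = two C a (g a) (d a) l E b (g' b) (d' b) ch2 r.
Proof.
  intros ND Hr Hne. destruct (reach_decomp _ _ _ Hr Hne) as [K [l [K2 [ch2 [r E]]]]]. subst Sk.
  eexists _, _, _, _, _. split.
  - apply two_step; auto.
  - intros g' d' Hg Hd. apply two_step; auto.
Qed.
Lemma map_fix_in {X} (f : X -> X) l : (forall x, In x l -> f x = x) -> map f l = l.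
Proof. induction l; simpl; intros H; auto. rewrite H, IHl; auto. Qed.

Section Ins.
Variables (a : nat) (t : skel).
Fixpoint ins (s : skel) : skel :=
  match s with SN n ch => SN n (if Nat.eqb n a then t :: map ins ch else map ins ch) end.
Fixpoint cins (K : sctx) : sctx :=
  match K with SH => SH | SC n l K' r =>
    SC n (if Nat.eqb n a then t :: map ins l else map ins l) (cins K') (map ins r) end.
Lemma ins_splug K s : ins (splug K s) = splug (cins K) (ins s).
Proof.
  induction K as [|n l K IH r]; simpl; auto. rewrite !map_app; simpl; rewrite IH.
  destruct (Nat.eqb n a); reflexivity.
Qed.
Lemma ins_notin s : ~ In a (snames s) -> ins s = s.
Proof.
  induction s as [n ch IH] using skel_ind'. simpl. intros H.
  destruct (Nat.eqb_spec n a). { exfalso; apply H; left; auto. }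
  f_equal. apply map_fix_in. intros c Hc. apply IH; auto. intro H'; apply H; right; apply in_flat_map; eauto.
Qed.
Lemma cins_notin K : ~ In a (cnames K) -> cins K = K.
Proof.
  induction K as [|n l K IH r]; simpl; intros H; auto.
  destruct (Nat.eqb_spec n a). { exfalso; apply H; left; auto. }
  assert (E1 : map ins l = l).
  { apply map_fix_in. intros c Hc. apply ins_notin. intro H'. apply H. right.
    rewrite !in_app_iff. left. apply in_flat_map; eauto. }
  assert (E2 : map ins r = r).
  { apply map_fix_in. intros c Hc. apply ins_notin. intro H'. apply H. right.
    rewrite !in_app_iff. right; right. apply in_flat_map; eauto. }
  assert (E3 : cins K = K).
  { apply IH. intro H'. apply H. right. rewrite !in_app_iff. auto. }
  rewrite E1, E2, E3. reflexivity.
Qed.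
Lemma ins_names s x : In x (snames s) -> In x (snames (ins s)).
Proof.
  induction s as [n ch IH] using skel_ind'. simpl. intros [H|H]; [left; auto| right].
  apply in_flat_map in H. destruct H as [c [Hc Hx]].
  assert (In (ins c) (map ins ch)) by (apply in_map; auto).
  destruct (Nat.eqb n a); simpl; [apply in_or_app; right|]; apply in_flat_map; exists (ins c); split; auto.
Qed.
End Ins.

Lemma ins_shape K a ch t : NoDup (snames (splug K (SN a ch))) ->
  ins a t (splug K (SN a ch)) = splug K (SN a (t :: ch)).
Proof.
  intros ND. destruct (nodup_splug _ _ ND) as [ND1 Hdis].
  rewrite ins_splug, cins_notin.
  - simpl. rewrite Nat.eqb_refl. rewrite map_fix_in; auto.
    intros c Hc. apply ins_notin. intro H. inversion ND1 as [|? ? Hn _]. apply Hn. apply in_flat_map; eauto.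
  - apply Hdis. simpl; auto.
Qed.

Lemma reach_ins Sk x y a t : reach Sk x y -> reach (ins a t Sk) x y.
Proof.
  intros [K [ch [E H]]]. subst.
  exists (cins a t K), (if Nat.eqb x a then t :: map (ins a t) ch else map (ins a t) ch).
  split.
  - rewrite ins_splug. reflexivity.
  - exact (ins_names a t (SN x ch) y H).
Qed.

Definition cnt (f : label -> nat) (L : list lform) (n : nat) : list form :=
  map snd (filter (fun x => Nat.eqb (f (fst x)) n) L).
Lemma cnt_app f L1 L2 n : cnt f (L1 ++ L2) n = cnt f L1 n ++ cnt f L2 n.
Proof. unfold cnt. rewrite filter_app, map_app. reflexivity. Qed.
Lemma cnt_cons_eq f x A L n : f x = n -> cnt f ((x,A)::L) n = A :: cnt f L n.
Proof. intros H. unfold cnt. simpl. rewrite H, Nat.eqb_refl. reflexivity. Qed.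
Lemma cnt_cons_self f x A L : cnt f ((x,A)::L) (f x) = A :: cnt f L (f x).
Proof. apply cnt_cons_eq; auto. Qed.
Lemma cnt_cons_ne f x A L n : f x <> n -> cnt f ((x,A)::L) n = cnt f L n.
Proof. intros H. unfold cnt. simpl. apply Nat.eqb_neq in H. rewrite H. reflexivity. Qed.
Lemma cnt_in f L x A : In (x,A) L -> In A (cnt f L (f x)).
Proof. intros H. unfold cnt. apply in_map_iff. exists (x,A). split; auto.
  apply filter_In. split; auto. simpl. apply Nat.eqb_refl. Qed.
Lemma cnt_ext f f' L n : (forall x A, In (x,A) L -> f' x = f x) -> cnt f' L n = cnt f L n.
Proof.
  induction L as [|[x A] L IH]; intros H; auto.
  assert (E : f' x = f x) by (eapply H; left; eauto).
  destruct (Nat.eqb_spec (f x) n).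
  - rewrite !cnt_cons_eq by congruence. rewrite IH; auto. intros; eapply H; right; eauto.
  - rewrite !cnt_cons_ne by congruence. rewrite IH; auto. intros; eapply H; right; eauto.
Qed.
Lemma cnt_nil f L n : (forall x A, In (x,A) L -> f x <> n) -> cnt f L n = [].
Proof.
  induction L as [|[x A] L IH]; intros H; auto. rewrite cnt_cons_ne.
  - apply IH; intros; eapply H; right; eauto.
  - eapply H; left; eauto.
Qed.
Lemma cnt_mid f l1 l2 w X : cnt f (l1 ++ (w,X) :: l2) (f w) = cnt f l1 (f w) ++ X :: cnt f l2 (f w).
Proof. rewrite cnt_app, cnt_cons_self. reflexivity. Qed.
Lemma cnt_mid_ne f l1 l2 w X m : m <> f w -> cnt f (l1 ++ (w,X) :: l2) m = cnt f (l1 ++ l2) m.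
Proof. intros H. rewrite !cnt_app, cnt_cons_ne; auto. Qed.

Definition fresh (l : list nat) := S (fold_right Nat.max 0 l).
Lemma fresh_notin l : ~ In (fresh l) l.
Proof.
  assert (H : forall x, In x l -> x <= fold_right Nat.max 0 l).
  { induction l; simpl; intros x Hx; [destruct Hx|]. destruct Hx as [Hx|Hx]; [subst; lia|]. specialize (IHl x Hx); lia. }
  intros H'; apply H in H'; unfold fresh in H'; lia.
Qed.

Lemma perm_split {X} (G G0 : list X) x G' : Permutation G (x :: G') -> Permutation G G0 ->
  exists l1 l2, G0 = l1 ++ x :: l2 /\ Permutation G' (l1 ++ l2).
Proof.
  intros H1 H2.
  assert (Hin : In x G0).
  { eapply Permutation_in; [exact H2|]. eapply Permutation_in; [symmetry; exact H1|]. left; reflexivity. }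
  destruct (in_split _ _ Hin) as [l1 [l2 E]]. exists l1, l2; split; auto.
  subst. apply Permutation_cons_app_inv with x. eapply perm_trans; [symmetry; exact H1 | exact H2].
Qed.

Definition Rinv Sk (f : label -> nat) (R : list rel_atom) :=
  forall x y, In (x,y) R -> reach' Sk (f x) (f y).
Definition Linv Sk (f : label -> nat) (L : list lform) :=
  forall x A, In (x,A) L -> In (f x) (snames Sk).

Lemma Linv_cons Sk f x A L : In (f x) (snames Sk) -> Linv Sk f L -> Linv Sk f ((x,A)::L).
Proof. intros H1 H2 y B [E|H]; [inversion E; subst; auto | eapply H2; eauto]. Qed.
Lemma Linv_sub Sk f L y L' : Permutation L (y :: L') -> Linv Sk f L -> Linv Sk f L'.
Proof. intros HP H x A Hin. eapply H. eapply Permutation_in; [symmetry; exact HP|]. right; exact Hin. Qed.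
Lemma Linv_head Sk f L x A L' : Permutation L ((x,A) :: L') -> Linv Sk f L -> In (f x) (snames Sk).
Proof. intros HP H. eapply H. eapply Permutation_in; [symmetry; exact HP|]. left; reflexivity. Qed.
Lemma main : forall R G D, LProv R G D -> forall Sk f G0 D0,
  Permutation G G0 -> Permutation D D0 -> NoDup (snames Sk) ->
  Rinv Sk f R -> Linv Sk f G -> Linv Sk f D ->
  NProv (build (cnt f G0) (cnt f D0) Sk).
Proof.
  induction 1 as [R G D w u p Hwu HwG HuD
                 |R G D w u Hwu HwG
                 |R G D D' w u A B HP Hr Hg Hd Hprem IH
                 |R G G' D w A B HP Hp1 IH1 Hp2 IH2
                 |R G D D' w A B HP Hp IH
                 |R G G' D w A B HP Hp IH
                 |R G D D' w A B HP Hp1 IH1 Hp2 IH2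
                 |R G D w u A B Hwu HwG Hp1 IH1 Hp2 IH2
                 |R G D w Hp IH
                 |R G D w u v H1 H2 Hp IH];
  intros Sk f G0 D0 HG HD ND HR HLG HLD.
  -
    assert (HinG : In (w, Var p) G0) by (eapply Permutation_in; eauto).
    assert (HinD : In (u, Var p) D0) by (eapply Permutation_in; eauto).
    destruct (Nat.eq_dec (f w) (f u)) as [Heq|Hne].
    + destruct (node_case Sk (cnt f G0) (cnt f D0) (f u) ND (HLD _ _ HuD)) as [C [chs [E0 _]]].
      rewrite E0. apply N_id_same with p. rewrite <- Heq; apply cnt_in; auto. apply cnt_in; auto.
    + destruct (HR _ _ Hwu) as [Heq|Hr]; [contradiction|].
      destruct (two_case Sk (cnt f G0) (cnt f D0) _ _ ND Hr Hne) as [C [l [E [ch2 [r [E0 _]]]]]].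
      rewrite E0. apply N_id_desc with p; apply cnt_in; auto.
  -
    assert (HinG : In (w, Bot) G0) by (eapply Permutation_in; eauto).
    destruct (node_case Sk (cnt f G0) (cnt f D0) (f w) ND (HLG _ _ HwG)) as [C [chs [E0 _]]].
    rewrite E0. apply N_botl. apply cnt_in; auto.
  -
    destruct (perm_split _ _ _ _ HP HD) as [l1 [l2 [-> Hl]]].
    assert (HwD : In (w, Imp A B) D) by (eapply Permutation_in; [symmetry; exact HP|left; reflexivity]).
    assert (Hw : In (f w) (snames Sk)) by (eapply HLD; eauto).
    destruct (name_decomp _ _ Hw) as [K [ch ->]].
    remember (fresh (snames (splug K (SN (f w) ch)))) as u' eqn:Eu'.
    assert (Hu' : ~ In u' (snames (splug K (SN (f w) ch)))) by (subst; apply fresh_notin).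
    clear Eu'.
    set (f' := fun x => if Nat.eqb x u then u' else f x).
    assert (Hwu : w <> u).
    { intro E. apply Hd. subst. unfold labels_F. apply (in_map fst) in HwD. exact HwD. }
    assert (Hf'u : f' u = u') by (unfold f'; rewrite Nat.eqb_refl; reflexivity).
    assert (Hf'w : f' w = f w) by (unfold f'; destruct (Nat.eqb_spec w u); [contradiction|reflexivity]).
    assert (Hf'G : forall x C, In (x,C) G0 -> f' x = f x).
    { intros x C HxC. unfold f'. destruct (Nat.eqb_spec x u); auto. subst x. exfalso. apply Hg.
      apply (Permutation_in _ (Permutation_sym HG)) in HxC. apply (in_map fst) in HxC. exact HxC. }
    assert (HinD : forall x C, In (x,C) (l1 ++ l2) -> In (x,C) D).
    { intros x C HxC. eapply Permutation_in; [symmetry; exact HD|].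
      apply in_app_or in HxC. apply in_or_app. simpl. tauto. }
    assert (Hf'D : forall x C, In (x,C) (l1 ++ l2) -> f' x = f x).
    { intros x C HxC. unfold f'. destruct (Nat.eqb_spec x u); auto. subst x. exfalso. apply Hd.
      apply HinD in HxC. apply (in_map fst) in HxC. exact HxC. }
    set (Sk' := splug K (SN (f w) (SN u' [] :: ch))).
    assert (HSk' : Sk' = ins (f w) (SN u' []) (splug K (SN (f w) ch))) by (symmetry; apply ins_shape; auto).
    assert (Hsub : forall z, In z (snames (splug K (SN (f w) ch))) -> In z (snames Sk')).
    { intros z Hz. rewrite HSk'. apply ins_names; auto. }
    assert (Hu'S : In u' (snames Sk')) by (apply in_splug; simpl; auto).
    assert (ND' : NoDup (snames Sk')).
    { unfold Sk'. apply (Permutation_NoDup (Permutation_sym (snames_splug K _))). simpl.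
      assert (ND0 := Permutation_NoDup (snames_splug K (SN (f w) ch)) ND). simpl in ND0.
      replace (cnames K ++ f w :: u' :: flat_map snames ch)
        with ((cnames K ++ [f w]) ++ u' :: flat_map snames ch) by (rewrite <- app_assoc; reflexivity).
      apply nodup_insert; rewrite <- app_assoc; simpl; [exact ND0|].
      intro Hin. apply Hu'. eapply Permutation_in; [symmetry; apply snames_splug|]. exact Hin. }
    assert (HR' : Rinv Sk' f' ((w,u)::R)).
    { intros x y [E|Hin].
      - injection E as E1 E2; subst x y. rewrite Hf'w, Hf'u. right. exists K, (SN u' [] :: ch).
        split; [reflexivity|simpl; right; left; reflexivity].
      - assert (Hx : x <> u).
        { intro Hxu; subst x. apply Hr. unfold labels_R. apply in_flat_map. exists (u,y); simpl; auto. }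
        assert (Hy : y <> u).
        { intro Hyu; subst y. apply Hr. unfold labels_R. apply in_flat_map. exists (x,u); simpl; auto. }
        unfold f'. destruct (Nat.eqb_spec x u); [contradiction|]. destruct (Nat.eqb_spec y u); [contradiction|].
        destruct (HR _ _ Hin) as [Heq|Hr']; [left; auto | right]. rewrite HSk'. apply reach_ins; auto. }
    assert (HLG' : Linv Sk' f' ((u,A)::G)).
    { intros x C [E|Hin].
      - injection E as E1 E2; subst x C. rewrite Hf'u. exact Hu'S.
      - assert (x <> u) by (intro Hxu; subst x; apply Hg; apply (in_map fst) in Hin; exact Hin).
        unfold f'. destruct (Nat.eqb_spec x u); [contradiction|]. apply Hsub. eapply HLG; eauto. }
    assert (HLD' : Linv Sk' f' ((u,B)::D')).
    { intros x C [E|Hin].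
      - injection E as E1 E2; subst x C. rewrite Hf'u. exact Hu'S.
      - assert (Hin' : In (x,C) D) by (eapply Permutation_in; [symmetry; exact HP|right; exact Hin]).
        assert (x <> u) by (intro Hxu; subst x; apply Hd; apply (in_map fst) in Hin'; exact Hin').
        unfold f'. destruct (Nat.eqb_spec x u); [contradiction|]. apply Hsub. eapply HLD; eauto. }
    assert (X := IH Sk' f' ((u,A)::G0) ((u,B)::l1++l2) (perm_skip _ HG) (perm_skip _ Hl) ND' HR' HLG' HLD').
    assert (Eq1 : forall m, m <> u' -> cnt f' ((u,A)::G0) m = cnt f G0 m).
    { intros m Hm. rewrite cnt_cons_ne by (rewrite Hf'u; congruence). apply cnt_ext. exact Hf'G. }
    assert (Eq2 : forall m, m <> u' -> cnt f' ((u,B)::l1++l2) m = cnt f (l1++l2) m).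
    { intros m Hm. rewrite cnt_cons_ne by (rewrite Hf'u; congruence). apply cnt_ext. exact Hf'D. }
    assert (Eq3 : cnt f' ((u,A)::G0) u' = [A]).
    { rewrite cnt_cons_eq by exact Hf'u. f_equal. rewrite (cnt_ext f f') by exact Hf'G.
      apply cnt_nil. intros x C HxC E. apply Hu'. rewrite <- E. eapply HLG.
      eapply Permutation_in; [symmetry; exact HG|exact HxC]. }
    assert (Eq4 : cnt f' ((u,B)::l1++l2) u' = [B]).
    { rewrite cnt_cons_eq by exact Hf'u. f_equal. rewrite (cnt_ext f f') by exact Hf'D.
      apply cnt_nil. intros x C HxC E. apply Hu'. rewrite <- E. eapply HLD. apply HinD; eauto. }
    assert (Hwu' : f w <> u') by (intro E; apply Hu'; rewrite <- E; exact Hw).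
    destruct (nodup_splug _ _ ND) as [ND1 Hdis].
    assert (Hagr : forall m, In m (snames (splug K (SN (f w) ch))) -> m <> f w ->
       cnt f' ((u,A)::G0) m = cnt f G0 m /\
       cnt f' ((u,B)::l1++l2) m = cnt f (l1 ++ (w, Imp A B) :: l2) m).
    { intros m Hm Hmw. assert (m <> u') by (intro Emu; rewrite Emu in Hm; contradiction).
      rewrite Eq1, Eq2 by auto. split; auto. symmetry; apply cnt_mid_ne; auto. }
    unfold Sk' in X. rewrite build_splug in X. cbn [build map] in X.
    rewrite Eq3, Eq4, (Eq1 (f w)), (Eq2 (f w)) in X by auto.
    rewrite (bctx_agree _ _ (cnt f G0) (cnt f (l1 ++ (w, Imp A B) :: l2)) K) in X.
    2:{ intros m Hm. apply Hagr. apply in_splug_ctx; auto. intro E. apply (Hdis (f w)); [simpl; auto|]. rewrite <- E; auto. }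
    rewrite (map_agree _ _ (cnt f G0) (cnt f (l1 ++ (w, Imp A B) :: l2)) ch) in X.
    2:{ intros m Hm. apply Hagr. apply in_splug; simpl; auto. intro E. subst m. inversion ND1; auto. }
    rewrite (cnt_app f l1 l2) in X.
    assert (Hfr : ~ In u' (names (build (cnt f G0) (cnt f (l1 ++ (w, Imp A B) :: l2)) (splug K (SN (f w) ch))))).
    { rewrite names_build. exact Hu'. }
    rewrite build_splug in Hfr |- *. cbn [build] in Hfr |- *.
    apply N_impr with (D' := cnt f l1 (f w) ++ cnt f l2 (f w)) (u := u') (A := A) (B := B).
    + rewrite cnt_mid. symmetry. apply Permutation_middle.
    + exact Hfr.
    + exact X.
  -
    destruct (perm_split _ _ _ _ HP HG) as [l1 [l2 [-> Hl]]].
    assert (Hw := Linv_head _ _ _ _ _ _ HP HLG).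
    destruct (node_case Sk (cnt f (l1 ++ (w, Or A B) :: l2)) (cnt f D0) (f w) ND Hw) as [C [chs [E0 E1]]].
    rewrite E0. apply N_orl with (G' := cnt f l1 (f w) ++ cnt f l2 (f w)) (A := A) (B := B).
    + rewrite cnt_mid. symmetry. apply Permutation_middle.
    + assert (X : NProv (build (cnt f ((w,A) :: l1 ++ l2)) (cnt f D0) Sk)).
      { apply IH1; auto. apply Linv_cons; auto. eapply Linv_sub; eauto. }
      rewrite E1 in X.
      * rewrite cnt_cons_self, (cnt_app f l1 l2) in X. exact X.
      * intros m Hm. rewrite cnt_cons_ne by congruence. apply cnt_mid_ne; auto.
      * reflexivity.
    + assert (X : NProv (build (cnt f ((w,B) :: l1 ++ l2)) (cnt f D0) Sk)).
      { apply IH2; auto. apply Linv_cons; auto. eapply Linv_sub; eauto. }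
      rewrite E1 in X.
      * rewrite cnt_cons_self, (cnt_app f l1 l2) in X. exact X.
      * intros m Hm. rewrite cnt_cons_ne by congruence. apply cnt_mid_ne; auto.
      * reflexivity.
  -
    destruct (perm_split _ _ _ _ HP HD) as [l1 [l2 [-> Hl]]].
    assert (Hw := Linv_head _ _ _ _ _ _ HP HLD).
    destruct (node_case Sk (cnt f G0) (cnt f (l1 ++ (w, Or A B) :: l2)) (f w) ND Hw) as [C [chs [E0 E1]]].
    rewrite E0. apply N_orr with (D' := cnt f l1 (f w) ++ cnt f l2 (f w)) (A := A) (B := B).
    + rewrite cnt_mid. symmetry. apply Permutation_middle.
    + assert (X : NProv (build (cnt f G0) (cnt f ((w,A) :: (w,B) :: l1 ++ l2)) Sk)).
      { apply IH; auto. apply Linv_cons; auto. apply Linv_cons; auto. eapply Linv_sub; eauto. }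
      rewrite E1 in X.
      * rewrite !cnt_cons_self, (cnt_app f l1 l2) in X. exact X.
      * reflexivity.
      * intros m Hm. rewrite !cnt_cons_ne by congruence. apply cnt_mid_ne; auto.
  -
    destruct (perm_split _ _ _ _ HP HG) as [l1 [l2 [-> Hl]]].
    assert (Hw := Linv_head _ _ _ _ _ _ HP HLG).
    destruct (node_case Sk (cnt f (l1 ++ (w, And A B) :: l2)) (cnt f D0) (f w) ND Hw) as [C [chs [E0 E1]]].
    rewrite E0. apply N_andl with (G' := cnt f l1 (f w) ++ cnt f l2 (f w)) (A := A) (B := B).
    + rewrite cnt_mid. symmetry. apply Permutation_middle.
    + assert (X : NProv (build (cnt f ((w,A) :: (w,B) :: l1 ++ l2)) (cnt f D0) Sk)).
      { apply IH; auto. apply Linv_cons; auto. apply Linv_cons; auto. eapply Linv_sub; eauto. }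
      rewrite E1 in X.
      * rewrite !cnt_cons_self, (cnt_app f l1 l2) in X. exact X.
      * intros m Hm. rewrite !cnt_cons_ne by congruence. apply cnt_mid_ne; auto.
      * reflexivity.
  -
    destruct (perm_split _ _ _ _ HP HD) as [l1 [l2 [-> Hl]]].
    assert (Hw := Linv_head _ _ _ _ _ _ HP HLD).
    destruct (node_case Sk (cnt f G0) (cnt f (l1 ++ (w, And A B) :: l2)) (f w) ND Hw) as [C [chs [E0 E1]]].
    rewrite E0. apply N_andr with (D' := cnt f l1 (f w) ++ cnt f l2 (f w)) (A := A) (B := B).
    + rewrite cnt_mid. symmetry. apply Permutation_middle.
    + assert (X : NProv (build (cnt f G0) (cnt f ((w,A) :: l1 ++ l2)) Sk)).
      { apply IH1; auto. apply Linv_cons; auto. eapply Linv_sub; eauto. }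
      rewrite E1 in X.
      * rewrite cnt_cons_self, (cnt_app f l1 l2) in X. exact X.
      * reflexivity.
      * intros m Hm. rewrite cnt_cons_ne by congruence. apply cnt_mid_ne; auto.
    + assert (X : NProv (build (cnt f G0) (cnt f ((w,B) :: l1 ++ l2)) Sk)).
      { apply IH2; auto. apply Linv_cons; auto. eapply Linv_sub; eauto. }
      rewrite E1 in X.
      * rewrite cnt_cons_self, (cnt_app f l1 l2) in X. exact X.
      * reflexivity.
      * intros m Hm. rewrite cnt_cons_ne by congruence. apply cnt_mid_ne; auto.
  -
    assert (HinG : In (w, Imp A B) G0) by (eapply Permutation_in; eauto).
    assert (Hw : In (f w) (snames Sk)) by (eapply HLG; eauto).
    assert (Hu : In (f u) (snames Sk)).
    { destruct (HR _ _ Hwu) as [Heq|Hr]; [rewrite <- Heq; auto|exact (proj2 (reach_in _ _ _ Hr))]. }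
    assert (X1 : NProv (build (cnt f ((u,B)::G0)) (cnt f D0) Sk)).
    { apply IH1; auto. apply Linv_cons; auto. }
    assert (X2 : NProv (build (cnt f G0) (cnt f ((u,A)::D0)) Sk)).
    { apply IH2; auto. apply Linv_cons; auto. }
    destruct (Nat.eq_dec (f w) (f u)) as [Heq|Hne].
    + destruct (node_case Sk (cnt f G0) (cnt f D0) (f u) ND Hu) as [C [chs [E0 E1]]].
      rewrite E0. apply N_impl_same with A B.
      * rewrite <- Heq; apply cnt_in; auto.
      * rewrite E1 in X1.
        -- rewrite cnt_cons_self in X1. exact X1.
        -- intros m Hm. rewrite cnt_cons_ne by congruence. reflexivity.
        -- reflexivity.
      * rewrite E1 in X2.
        -- rewrite cnt_cons_self in X2. exact X2.
        -- reflexivity.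
        -- intros m Hm. rewrite cnt_cons_ne by congruence. reflexivity.
    + destruct (HR _ _ Hwu) as [Heq|Hr]; [contradiction|].
      destruct (two_case Sk (cnt f G0) (cnt f D0) _ _ ND Hr Hne) as [C [l [E [ch2 [r [E0 E1]]]]]].
      rewrite E0. apply N_impl_desc with A B.
      * apply cnt_in; auto.
      * rewrite E1 in X1.
        -- rewrite cnt_cons_self in X1. exact X1.
        -- intros m Hm. rewrite cnt_cons_ne by congruence. reflexivity.
        -- reflexivity.
      * rewrite E1 in X2.
        -- rewrite cnt_cons_self in X2. exact X2.
        -- reflexivity.
        -- intros m Hm. rewrite cnt_cons_ne by congruence. reflexivity.
  -
    apply IH; auto. intros x y [E|Hin].
    + inversion E; subst. left; reflexivity.
    + apply HR; auto.
  -
    apply IH; auto. intros x y [E|Hin].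
    + inversion E; subst. apply (reach'_trans _ _ (f u)); auto.
    + apply HR; auto.
Qed.

Theorem mainTheorem9 : forall (A : form) (w : label),
  LProv [] [] [(w, A)] -> NProv (Node root_name [] [A] []).
Proof.
  intros A w H.
  assert (X := main _ _ _ H (SN 0 []) (fun _ => 0) [] [(w,A)] (Permutation_refl _) (Permutation_refl _)).
  change (Node root_name [] [A] []) with (build (cnt (fun _ => 0) []) (cnt (fun _ => 0) [(w,A)]) (SN 0 [])).
  apply X.
  - constructor; [simpl; auto | constructor].
  - intros x y [].
  - intros x C [].
  - intros x C _. simpl. auto.
Qed.
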